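(* Let $1 < n \leq m$ and let $W \in \mathbb{R}^{m \times n}$ have rows $w_1,\dots,w_m \in \mathbb{R}^n$. The map $\mathbb{R}^n \to \mathbb{R}^m$, $x \mapsto \operatorname{ReLU}(Wx)$ (with $\operatorname{ReLU}(y)=\max(y,0)$ applied componentwise) is injective if and only if $W$ has a directed spanning set of $\mathbb{R}^n$ with respect to every $x \in \mathbb{R}^n$.
   Context: Directed spanning set (DSS): for a matrix $W$ with rows $w_i \in \mathbb{R}^n$, a subspace (or set) $\Omega \subset \mathbb{R}^n$ and a vector $x \in \mathbb{R}^n$, $W$ has a DSS of $\Omega$ with respect to $x$ if there is a collection of rows $w_i$ of $W$, each satisfying $\langle x, w_i\rangle \geq 0$, whose linear span contains $\Omega$. Equivalently, $W$ has a DSS of $\mathbb{R}^n$ w.r.t. $x$ iff the rows $\{w_i : \langle x,w_i\rangle \ge 0\}$ span $\mathbb{R}^n$. *)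

(* Defs.v *)
From mathcomp Require Import all_boot all_order all_algebra.
From mathcomp Require Import reals.
Set Implicit Arguments. Unset Strict Implicit. Unset Printing Implicit Defensive.
Import Order.TTheory GRing.Theory Num.Theory.
Local Open Scope ring_scope.

(* Vectors of R^n are column vectors 'cV[R]_n; W : 'M[R]_(m, n) has rows w_i = row i W. *)

Definition relu (R : realType) (m : nat) (y : 'cV[R]_m) : 'cV[R]_m :=
  \col_i Num.max (y i 0) 0.

Definition relu_layer (R : realType) (m n : nat) (W : 'M[R]_(m, n))
  (x : 'cV[R]_n) : 'cV[R]_m := relu (W *m x).

Definition row_dot (R : realType) (m n : nat) (W : 'M[R]_(m, n))
  (x : 'cV[R]_n) (i : 'I_m) : R := \sum_(j < n) x j 0 * W i j.

(* The matrix whose rows are the rows of W indexed by S (other rows zeroed);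
   its row space is the linear span of {w_i : i in S}. *)
Definition rows_of (R : realType) (m n : nat) (W : 'M[R]_(m, n))
  (S : {set 'I_m}) : 'M[R]_(m, n) :=
  \matrix_(i < m) (if i \in S then row i W else 0).

(* W has a directed spanning set of the subspace Omega (given by the row space
   of a matrix Omega) w.r.t. x: there is a collection S of rows w_i of W, each
   with <x, w_i> >= 0, whose linear span contains Omega. *)
Definition has_DSS (R : realType) (m n k : nat) (W : 'M[R]_(m, n))
  (Omega : 'M[R]_(k, n)) (x : 'cV[R]_n) : Prop :=
  exists S : {set 'I_m},
    (forall i, i \in S -> 0 <= row_dot W x i) /\ (Omega <= rows_of W S)%MS.

(* Main.v *)
Require Import Defs.
From mathcomp Require Import all_boot all_order all_algebra.
From mathcomp Require Import reals.
From mathcomp Require Import lra.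
Import Order.TTheory GRing.Theory Num.Theory.
Local Open Scope ring_scope.

Lemma max0E (R : realType) (a : R) : Num.max a 0 = if a <= 0 then 0 else a.
Proof.
by case: (lerP a 0).
Qed.

Lemma relu_eq_aux {R : realType} (a b : R) :
  Num.max a 0 = Num.max b 0 -> 0 <= a + b -> a = b.
Proof.
rewrite !max0E; case: (lerP a 0); case: (lerP b 0) => hb ha //; lra.
Qed.

Lemma row_dotE (R : realType) (m n : nat) (W : 'M[R]_(m, n)) x i :
  row_dot W x i = (W *m x) i 0.
Proof.
rewrite /row_dot mxE; apply: eq_bigr => j _; exact: mulrC.
Qed.

Lemma rows_of_mul (R : realType) (m n : nat) (W : 'M[R]_(m, n)) S
  (v : 'cV[R]_n) i :
  (rows_of W S *m v) i 0 = if i \in S then (W *m v) i 0 else 0.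
Proof.
have E : forall j, rows_of W S i j = if i \in S then W i j else 0.
  by move=> j; rewrite /rows_of !mxE; case: (i \in S); rewrite !mxE.
rewrite !mxE; under eq_bigr do rewrite E.
case: (i \in S) => //.
by rewrite big1 // => j _; rewrite mul0r.
Qed.

Theorem theorem1 (R : realType) (m n : nat) (W : 'M[R]_(m, n)) :
  (1 < n)%N -> (n <= m)%N ->
  (injective (relu_layer W) <->
   forall x : 'cV[R]_n, has_DSS W (1%:M : 'M[R]_n) x).
Proof.
move=> _ _; split.
- move=> inj x.
  pose S := [set i | 0 <= row_dot W x i].
  exists S; split; first by move=> i; rewrite inE.
  set A := rows_of W S.
  case: (boolP (1%:M <= A)%MS) => // hA; exfalso.
  have : cokermx A != 0 by rewrite cokermx_eq0 -sub1mx.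
  case/matrix0Pn => k [j hkj].
  pose v := col j (cokermx A).
  have Av : A *m v = 0 by rewrite /v colE mulmxA mulmx_coker mul0mx.
  have vS : forall i, i \in S -> (W *m v) i 0 = 0.
    move=> i iS; have := congr1 (fun M : 'cV[R]_m => M i 0) Av.
    by rewrite /= /A rows_of_mul iS => ->; rewrite mxE.
  pose a i := (W *m x) i 0.
  pose c i := (W *m v) i 0.
  pose f l := if l \in S then 0 else `|c l| / `|a l|.
  pose t := 1 + \sum_i f i.
  have f0 : forall i, 0 <= f i.
    by move=> i; rewrite /f; case: (i \in S) => //; rewrite divr_ge0.
  have tf : forall i, f i + 1 <= t.
    move=> i; rewrite /t addrC lerD2l (bigD1 i) //= lerDl.
    by apply: sumr_ge0 => l _.
  have : relu_layer W (t *: x + v) = relu_layer W (t *: x).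
    apply/matrixP => i l; rewrite (ord1 l) /relu_layer /relu mulmxDr -scalemxAr.
    rewrite [LHS]mxE [RHS]mxE; rewrite [X in Num.max X 0 = _]mxE; rewrite [X in Num.max (X + _) 0]mxE.
    rewrite [X in _ = Num.max X 0]mxE.
    case: (boolP (i \in S)) => iS; first by rewrite vS // addr0.
    have ha : a i < 0.
      by move: iS; rewrite inE row_dotE -/(a i) -ltNge.
    have hti : f i + 1 <= t := tf i.
    have hfi : f i * `|a i| = `|c i|.
      by rewrite /f (negbTE iS) divfK // normr_eq0 ltr0_neq0.
    have t0 : 0 < t by apply: lt_le_trans hti; have := f0 i; lra.
    have h1 : t * a i < 0 by rewrite pmulr_rlt0.
    have h2 : t * a i + c i < 0.
      have hc : c i <= `|c i| := ler_norm _.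
      have : (f i + 1) * `|a i| <= t * `|a i|.
        by rewrite ler_pM2r // normr_gt0 ltr0_neq0.
      rewrite mulrDl hfi mul1r (ltr0_norm ha).
      rewrite -/(c i) -/(a i); nra.
    rewrite -/(a i) -/(c i).
    by rewrite !max0E !ifT // ltW.
  move/inj/eqP; rewrite -subr_eq0 addrC addKr => /eqP v0.
  move: hkj; have := congr1 (fun M : 'cV[R]_n => M k 0) v0.
  by rewrite /v !mxE => ->; rewrite eqxx.
- move=> H x y hxy.
  have [S [HS HA]] := H (x + y).
  have key : rows_of W S *m (x - y) = 0.
    apply/matrixP => i l; rewrite (ord1 l) rows_of_mul.
    case: (boolP (i \in S)) => iS; last by rewrite mxE.
    have := HS i iS; rewrite row_dotE mulmxDr mxE => hs.
    have := congr1 (fun M : 'cV[R]_m => M i 0) hxy; rewrite /relu_layer /relu [LHS]mxE [RHS]mxE => e.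
    have oppE : forall M : 'cV[R]_m, (- M) i 0 = - M i 0 by move=> M; rewrite mxE.
    rewrite mulmxBr [RHS]mxE [LHS]mxE oppE (relu_eq_aux _ _ e hs) subrr.
    done.
  case/submxP: HA => D hD.
  apply/eqP; rewrite -subr_eq0; apply/eqP.
  by rewrite -[x - y]mul1mx hD -mulmxA key mulmx0.
Qed.
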